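(* Let $\alpha\in(0,1)$. For $\mu\in[0,\infty]$ let $f_\mu:\mathcal X\times\mathcal Y\to\{0,1\}$ and $g_\mu:\mathcal X\to\{0,1\}$ be (measurable) indicator functions such that for every $(x,y)\in\mathcal X\times\mathcal Y$: (1) $\mu\mapsto f_\mu(x,y)$ is non-increasing on $[0,\infty)$ and $f_\mu(x,y)\le g_\mu(x)$ for all $\mu\in[0,\infty)$; (2) $\mu\mapsto f_\mu(x,y)$ and $\mu\mapsto g_\mu(x)$ are right-continuous on $[0,\infty)$; (3) $f_\infty(x,y)=g_\infty(x)=0$. Let $(X_i,Y_i)_{i=1}^{n+m}$ be i.i.d. with common distribution $P_{XY}$. Define $$\mu_\alpha=\min\left\{\mu\ge 0:\ \frac{\frac{1}{n+1}\left(\sum_{i=1}^n f_\mu(X_i,Y_i)+1\right)}{\frac1m\left(1\vee\sum_{i=1}^m g_\mu(X_{n+i})\right)}\le\alpha\right\},$$ or $\mu_\alpha=\infty$ if no such $\mu$ exists. Then $$\mathbb E\left[\frac{\sum_{i=1}^m f_{\mu_\alpha}(X_{n+i},Y_{n+i})}{1\vee\sum_{i=1}^m g_{\mu_\alpha}(X_{n+i})}\right]\le\alpha.$$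
   Context: $a\vee b=\max(a,b)$. *)

(* Defs.v *)
From HB Require Import structures.
From mathcomp Require Import all_boot all_order all_algebra.
From mathcomp Require Import all_classical all_reals all_analysis.
Set Implicit Arguments. Unset Strict Implicit. Unset Printing Implicit Defensive.
Import Order.TTheory GRing.Theory Num.Theory.
Import numFieldNormedType.Exports.
Local Open Scope classical_set_scope.
Local Open Scope ring_scope.

(* Z i : Omega -> X * Y, i = 0, ..., n+m-1 (0-indexed version of i = 1..n+m):
   indices 0..n-1 are the calibration sample (X_1,Y_1)..(X_n,Y_n),
   indices n..n+m-1 are the test sample (X_{n+1},Y_{n+1})..(X_{n+m},Y_{n+m}). *)

Definition mutually_independent {R : realType} {d : measure_display}
  {Omega : measurableType d} {dZ : measure_display} {Z : measurableType dZ}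
  (P : probability Omega R) (N : nat) (V : nat -> Omega -> Z) : Prop :=
  forall B : nat -> set Z, (forall i, measurable (B i)) ->
    P (\bigcap_(i in [set i | (i < N)%N]) (V i @^-1` B i)) =
    \big[*%E/1%E]_(i < N) P (V i @^-1` B i).

Definition identically_distributed {R : realType} {d : measure_display}
  {Omega : measurableType d} {dZ : measure_display} {Z : measurableType dZ}
  (P : probability Omega R) (N : nat) (V : nat -> Omega -> Z) : Prop :=
  forall i j, (i < N)%N -> (j < N)%N -> forall B : set Z, measurable B ->
    P (V i @^-1` B) = P (V j @^-1` B).

Section Conformal.
Context {R : realType} {dX dY : measure_display}
  {X : measurableType dX} {Y : measurableType dY} {Omega : Type}.
Variables (f : \bar R -> X -> Y -> bool) (g : \bar R -> X -> bool)
  (n m : nat) (Z : nat -> Omega -> X * Y).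

Definition ratio_hat (w : Omega) (mu : R) : R :=
  ((n.+1%:R)^-1 * (\sum_(i < n) (f mu%:E (Z i w).1 (Z i w).2)%:R + 1)) /
  ((m%:R)^-1 * Num.max 1 (\sum_(i < m) (g mu%:E (Z (n + i) w).1)%:R)).

(* mu_alpha: the least mu >= 0 with ratio_hat <= alpha, +oo if none exists.
   Written as the infimum in \bar R (inf of the empty set is +oo). *)
Definition mu_alpha (alpha : R) (w : Omega) : \bar R :=
  ereal_inf [set mu%:E | mu in [set mu : R | 0 <= mu /\ ratio_hat w mu <= alpha]].

Definition fdp_at (mu : \bar R) (w : Omega) : R :=
  (\sum_(i < m) (f mu (Z (n + i) w).1 (Z (n + i) w).2)%:R) /
  Num.max 1 (\sum_(i < m) (g mu (Z (n + i) w).1)%:R).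

End Conformal.

(* Main.v *)
Require Import Defs.
From HB Require Import structures.
From mathcomp Require Import all_boot all_order all_algebra.
From mathcomp Require Import all_classical all_reals all_analysis.
Set Implicit Arguments. Unset Strict Implicit. Unset Printing Implicit Defensive.
Import Order.TTheory GRing.Theory Num.Theory.
Import numFieldNormedType.Exports.
Local Open Scope classical_set_scope.
Local Open Scope ring_scope.

Section generic.
Context {R : realType}.

Lemma near_bool (b : R -> bool) (s : R) :
  (fun u => (b u)%:R : R) @ s^'+ --> ((b s)%:R : R) ->
  \forall u \near s^'+, b u = b s.
Proof.
move/cvgrPdist_lt => /(_ 1%R ltr01); apply: filterS => u.
by case: (b u); case: (b s); rewrite //= ?subrr ?subr0 ?sub0r ?normrN normr1 ltxx.
Qed.

Lemma near_right_ex (P : R -> Prop) (s : R) :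
  (\forall u \near s^'+, P u) -> exists2 e : R, 0 < e & forall u, s < u < s + e -> P u.
Proof.
move=> /nbhs_ballP[e e0 He]; exists e => // u /andP[su us]; apply: He => //.
rewrite /ball /= ltr_distlC; apply/andP; split => //.
by rewrite (lt_trans _ su) // ltrBlDr ltrDl.
Qed.

Lemma near_right_rat (P : R -> Prop) (s c : R) :
  (\forall u \near s^'+, P u) -> s < c -> exists q : rat, s < ratr q < c /\ P (ratr q).
Proof.
move=> /near_right_ex[e e0 He] sc.
have : s < Num.min c (s + e) by rewrite lt_min sc ltrDl e0.
move=> /rat_in_itvoo[q]; rewrite in_itv /= => /andP[sq]; rewrite lt_min => /andP[qc qe].
by exists q; split; [rewrite sq qc | apply: He; rewrite sq qe].
Qed.

Lemma le_integral_nm d (T : measurableType d) (mu : {measure set T -> \bar R})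
  (f1 f2 : T -> \bar R) : (forall x, (0 <= f1 x)%E) -> (forall x, (f1 x <= f2 x)%E) ->
  (\int[mu]_x f1 x <= \int[mu]_x f2 x)%E.
Proof.
move=> f10 f12; rewrite !ge0_integralTE //; last by move=> x; exact: le_trans (f12 x).
apply: le_ereal_sup => _ [h hf1 <-]; exists h => //= x; exact: le_trans (f12 x).
Qed.

End generic.

From mathcomp Require Import ring lra.
From mathcomp Require Import measurable_realfun.

Section core.
Context {R : realType} {dX dY : measure_display}
  {X : measurableType dX} {Y : measurableType dY}.
Context (f : \bar R -> X -> Y -> bool) (g : \bar R -> X -> bool) (n m : nat) (alpha : R).
Context (alpha0 : 0 <= alpha)
  (fmono : forall x y (mu mu' : R), 0 <= mu -> mu <= mu' -> f mu'%:E x y -> f mu%:E x y)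
  (fg : forall x y (mu : R), 0 <= mu -> f mu%:E x y -> g mu%:E x)
  (frc : forall x y (mu : R), 0 <= mu ->
     (fun t : R => (f t%:E x y)%:R : R) @ mu^'+ --> ((f mu%:E x y)%:R : R))
  (grc : forall x (mu : R), 0 <= mu ->
     (fun t : R => (g t%:E x)%:R : R) @ mu^'+ --> ((g mu%:E x)%:R : R))
  (finf : forall x y, f +oo%E x y = false).

Local Notation T := (X * Y)%type.
Local Notation N := (n + m)%N.

Definition fz (mu : \bar R) (t : N.-tuple T) (k : 'I_N) : R :=
  (f mu (tnth t k).1 (tnth t k).2)%:R.
Definition gz (mu : \bar R) (t : N.-tuple T) (k : 'I_N) : R :=
  (g mu (tnth t k).1)%:R.
Definition Fcal mu t := \sum_(i < n) fz mu t (lshift m i).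
Definition Gt mu t := \sum_(i < m) gz mu t (rshift n i).
Definition rt t (mu : R) : R :=
  ((n.+1%:R)^-1 * (Fcal mu%:E t + 1)) / ((m%:R)^-1 * Num.max 1 (Gt mu%:E t)).
Definition muT t : \bar R :=
  ereal_inf [set mu%:E | mu in [set mu : R | 0 <= mu /\ rt t mu <= alpha]].
Definition fdpT mu t : R :=
  (\sum_(i < m) fz mu t (rshift n i)) / Num.max 1 (Gt mu t).
Definition Gj mu t (j : 'I_m) := \sum_(i < m | i != j) gz mu t (rshift n i) + 1.
Definition Sj (j : 'I_m) mu t := Fcal mu t + fz mu t (rshift n j).
Definition rj (j : 'I_m) t (mu : R) : R :=
  ((n.+1%:R)^-1 * Sj j mu%:E t) / ((m%:R)^-1 * Gj mu%:E t j).
Definition nuj j t : \bar R :=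
  ereal_inf [set mu%:E | mu in [set mu : R | 0 <= mu /\ rj j t mu <= alpha]].
Definition Hk j k t := fz (nuj j t) t k / Sj j (nuj j t) t.

Lemma fz01 mu t k : fz mu t k = 0 \/ fz mu t k = 1.
Proof. by rewrite /fz; case: f; [right|left]. Qed.
Lemma gz01 mu t k : gz mu t k = 0 \/ gz mu t k = 1.
Proof. by rewrite /gz; case: g; [right|left]. Qed.
Lemma fz_ge0 mu t k : 0 <= fz mu t k. Proof. by rewrite /fz ler0n. Qed.
Lemma gz_ge0 mu t k : 0 <= gz mu t k. Proof. by rewrite /gz ler0n. Qed.
Lemma Fcal_ge0 mu t : 0 <= Fcal mu t.
Proof. by apply: sumr_ge0 => i _; exact: fz_ge0. Qed.
Lemma Gt_ge0 mu t : 0 <= Gt mu t.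
Proof. by apply: sumr_ge0 => i _; exact: gz_ge0. Qed.
Lemma Gj_ge1 mu t j : 1 <= Gj mu t j.
Proof. by rewrite /Gj lerDr; apply: sumr_ge0 => i _; exact: gz_ge0. Qed.
Lemma Sj_ge0 j mu t : 0 <= Sj j mu t.
Proof. by rewrite /Sj addr_ge0 ?Fcal_ge0 ?fz_ge0. Qed.
Lemma Hk_ge0 j k t : 0 <= Hk j k t.
Proof. by rewrite /Hk divr_ge0 ?fz_ge0 ?Sj_ge0. Qed.

Lemma nc t (s : R) : 0 <= s -> \forall u \near s^'+,
  forall k, fz u%:E t k = fz s%:E t k /\ gz u%:E t k = gz s%:E t k.
Proof.
move=> s0; apply: filter_forall => k.
have h1 := near_bool (@frc (tnth t k).1 (tnth t k).2 s s0).
have h2 := near_bool (@grc (tnth t k).1 s s0).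
near=> u; split; [by rewrite /fz (near h1 u) | by rewrite /gz (near h2 u)].
Unshelve. all: by end_near.
Qed.

Lemma nc_rt t (s : R) : 0 <= s -> \forall u \near s^'+, rt t u = rt t s.
Proof.
move=> /(nc t); apply: filterS => u H.
rewrite /rt /Fcal /Gt; congr (_ * (_ + _) / (_ * Num.max _ _)).
  by apply: eq_bigr => i _; case: (H (lshift m i)).
by apply: eq_bigr => i _; case: (H (rshift n i)).
Qed.

Lemma nc_rj j t (s : R) : 0 <= s -> \forall u \near s^'+, rj j t u = rj j t s.
Proof.
move=> /(nc t); apply: filterS => u H.
rewrite /rj /Sj /Gj /Fcal; congr (_ * (_ + _) / (_ * (_ + _))).
- by apply: eq_bigr => i _; case: (H (lshift m i)).
- by case: (H (rshift n j)).
by apply: eq_bigr => i _; case: (H (rshift n i)).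
Qed.

Lemma muT_ge0 t : (0 <= muT t)%E.
Proof. by apply/ereal_infP => _ [mu [mu0 _] <-]; rewrite lee_fin. Qed.
Lemma nuj_ge0 j t : (0 <= nuj j t)%E.
Proof. by apply/ereal_infP => _ [mu [mu0 _] <-]; rewrite lee_fin. Qed.

Lemma muT_attain t (s : R) : muT t = s%:E -> 0 <= s /\ rt t s <= alpha.
Proof.
move=> Es; have s0 : 0 <= s by rewrite -lee_fin -Es muT_ge0.
split => //.
have [e e0 He] := near_right_ex (nc_rt t s0).
have : (muT t < (s + e)%:E)%E by rewrite Es lte_fin ltrDl.
move=> /ereal_inf_lt[_ [u [u0 ule] <-]]; rewrite lte_fin => use.
have su : s <= u by rewrite -lee_fin -Es; apply: ereal_inf_lbound; exists u.
move: su; rewrite le_eqVlt => /predU1P[-> //|su].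
by rewrite -(He u) // su use.
Qed.

Lemma rshift_neq_lshift (i : 'I_n) (j : 'I_m) : rshift n j != lshift m i.
Proof. by apply/eqP => /(congr1 val) /= H; move: (ltn_ord i); rewrite -H ltnNge leq_addr. Qed.

Lemma Gt_Gj mu t j : g mu (tnth t (rshift n j)).1 -> Gt mu t = Gj mu t j.
Proof. by move=> H; rewrite /Gt /Gj (bigD1 j) //= {1}/gz H addrC. Qed.

Lemma rj_rt j t u : 0 <= u ->
  f u%:E (tnth t (rshift n j)).1 (tnth t (rshift n j)).2 -> rj j t u = rt t u.
Proof.
move=> u0 H; have Hg := fg u0 H.
by rewrite /rj /rt /Sj /fz H (Gt_Gj Hg) max_r ?Gj_ge1.
Qed.

Lemma nuj_eq j t s : muT t = s%:E ->
  f s%:E (tnth t (rshift n j)).1 (tnth t (rshift n j)).2 -> nuj j t = s%:E.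
Proof.
move=> Es H; have [s0 rts] := muT_attain Es.
apply/eqP; rewrite eq_le; apply/andP; split.
  by apply: ereal_inf_lbound; exists s => //; split => //; rewrite rj_rt.
apply/ereal_infP => _ [u [u0 ru] <-]; rewrite lee_fin.
rewrite leNgt; apply/negP => us.
have Hu := fmono u0 (ltW us) H.
have : (muT t <= u%:E)%E.
  by apply: ereal_inf_lbound; exists u => //; split => //; rewrite -(rj_rt u0 Hu).
by rewrite Es lee_fin leNgt us.
Qed.

Lemma term_bound t (j : 'I_m) :
  fz (muT t) t (rshift n j) / Num.max 1 (Gt (muT t) t) <=
  (alpha * n.+1%:R / m%:R) * Hk j (rshift n j) t.
Proof.
have m0 : (0 < m)%N by case: j => j /= /(leq_ltn_trans (leq0n j)).
have cge0 : 0 <= alpha * n.+1%:R / m%:R by rewrite divr_ge0 ?mulr_ge0.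
rewrite {1}/fz; case Ef : f; last first.
  by rewrite /= mul0r mulr_ge0 ?Hk_ge0.
case Em : (muT t) Ef => [s||] Ef; last 2 first.
- by rewrite finf in Ef.
- by have := muT_ge0 t; rewrite Em.
have [s0 rts] := muT_attain Em.
have Enu := nuj_eq Em Ef.
have Hg := fg s0 Ef.
rewrite /Hk Enu /fz Ef (Gt_Gj Hg) max_r ?Gj_ge1 //.
move: rts; rewrite -(rj_rt s0 Ef) /rj.
have G1 := Gj_ge1 s%:E t j.
have S1 : 1 <= Sj j s%:E t by rewrite /Sj /fz Ef lerDr Fcal_ge0.
set a := Sj j s%:E t; set b := Gj s%:E t j => H.
have a0 : 0 < a by apply: lt_le_trans S1.
have b0 : 0 < b by apply: lt_le_trans G1.
have mR : 0 < m%:R :> R by rewrite ltr0n.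
have nR : 0 < n.+1%:R :> R by rewrite ltr0n.
have key : a * m%:R <= alpha * n.+1%:R * b.
  have E1 : n.+1%:R^-1 * a / (m%:R^-1 * b) = (a * m%:R) / (n.+1%:R * b).
    by field; rewrite !gt_eqF.
  rewrite E1 ler_pdivrMr ?mulr_gt0 // in H.
  by rewrite (le_trans H) // mulrA.
rewrite -subr_ge0.
have -> : alpha * n.+1%:R / m%:R * (1%:R / a) - 1%:R / b =
          (alpha * n.+1%:R * b - a * m%:R) / (m%:R * a * b).
  by field; rewrite !gt_eqF.
by rewrite divr_ge0 ?subr_ge0 // !mulr_ge0 // ltW.
Qed.

Lemma fdp_bound t : fdpT (muT t) t <=
  \sum_(j < m) (alpha * n.+1%:R / m%:R) * Hk j (rshift n j) t.
Proof. by rewrite /fdpT mulr_suml; apply: ler_sum => j _; exact: term_bound. Qed.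

Context (mf : forall mu : R, 0 <= mu -> measurable [set p : X * Y | f mu%:E p.1 p.2])
  (mg : forall mu : R, 0 <= mu -> measurable [set x : X | g mu%:E x]).

Lemma mset (b : N.-tuple T -> bool) : measurable_fun setT b -> measurable [set t | b t].
Proof. by move=> mb; have := mb measurableT [set true] (ltac:(by [])); rewrite setTI. Qed.

Lemma mind (b : N.-tuple T -> bool) : measurable [set t | b t] ->
  measurable_fun setT (fun t => (b t)%:R : R).
Proof.
move=> mA; rewrite (_ : (fun t => _) = \1_[set t | b t]); first exact: measurable_indic.
apply/funext => t; rewrite /indic; case E : (b t).
  by rewrite mem_set.
by rewrite memNset //= E.
Qed.

Lemma mfz (q : R) k : 0 <= q ->
  measurable [set t : N.-tuple T | f q%:E (tnth t k).1 (tnth t k).2].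
Proof.
move=> q0; rewrite -[X in measurable X]setTI.
exact: (measurable_tnth k) measurableT _ (mf q0).
Qed.

Lemma mgz (q : R) k : 0 <= q ->
  measurable [set t : N.-tuple T | g q%:E (tnth t k).1].
Proof.
move=> q0; rewrite -[X in measurable X]setTI.
have mfst : measurable_fun setT (fun t : N.-tuple T => (tnth t k).1).
  exact: measurableT_comp (measurable_tnth k).
exact: mfst measurableT _ (mg q0).
Qed.

Lemma mSj j (r : R) : 0 <= r -> measurable_fun setT (fun t => Sj j r%:E t).
Proof.
move=> r0; rewrite /Sj /Fcal /fz; apply: measurable_funD.
  by apply: measurable_sum => i; apply: mind; apply: mfz.
by apply: mind; apply: mfz.
Qed.

Lemma mGj j (r : R) : 0 <= r -> measurable_fun setT (fun t => Gj r%:E t j).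
Proof.
move=> r0; rewrite (_ : (fun t => _) = (fun t => \sum_(i < m)
   (if i != j then gz r%:E t (rshift n i) else 0) + 1)); last first.
  by apply/funext => t; rewrite /Gj big_mkcond.
apply: measurable_funD => //; apply: measurable_sum => i.
case: (i != j) => //; rewrite /gz; apply: mind; exact: mgz.
Qed.

Lemma rjE j t r : rj j t r = (Sj j r%:E t * m%:R) / (n.+1%:R * Gj r%:E t j).
Proof.
have m0 : (0 < m)%N by case: j => j /= /(leq_ltn_trans (leq0n j)).
have G0 : Gj r%:E t j != 0 by rewrite gt_eqF // (lt_le_trans ltr01) ?Gj_ge1.
rewrite /rj; field; have := ler0n R n; have mR : (0 < m%:R :> R) by rewrite ltr0n. rewrite G0 /= (gt_eqF mR) andbT => h; rewrite gt_eqF //; lra.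
Qed.

Lemma mrj j (r : R) : 0 <= r -> measurable [set t | rj j t r <= alpha].
Proof.
move=> r0.
rewrite (_ : [set t | _] = [set t | Sj j r%:E t * m%:R <= alpha * n.+1%:R * Gj r%:E t j]).
  apply: mset; apply: measurable_fun_ler.
    by apply: measurable_funM => //; exact: mSj.
  by apply: measurable_funM => //; exact: mGj.
apply/seteqP; split => t /=; rewrite rjE ler_pdivrMr ?mulrA //;
  by rewrite mulr_gt0 ?ltr0n // (lt_le_trans ltr01) ?Gj_ge1.
Qed.

Lemma mnu_lt j (q : R) : measurable [set t | (nuj j t < q%:E)%E].
Proof.
pose F := fun r : rat =>
   [set t : N.-tuple T | (0 <= (ratr r : R) /\ ratr r < q) /\ rj j t (ratr r) <= alpha].
suff -> : [set t | (nuj j t < q%:E)%E] = \bigcup_r F r.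
  apply: countable_bigcupT_measurable; first exact: countableP.
  move=> r; have [h|h] := pselect (0 <= (ratr r : R) /\ (ratr r : R) < q).
    rewrite /F (_ : [set t | _] = [set t | rj j t (ratr r) <= alpha]).
      by apply: mrj; case: h.
    by apply/seteqP; split => t /=; [case | split].
  by rewrite /F (_ : [set t | _] = set0) //; apply/seteqP; split => t //= [].
apply/seteqP; split => t /=.
  move=> /ereal_inf_lt[_ [u [u0 ru] <-]]; rewrite lte_fin => uq.
  have [r [/andP[ur rq] Er]] := near_right_rat (nc_rj j t u0) uq.
  exists r => //=; split; first by rewrite (le_trans u0) ?ltW.
  by rewrite Er.
move=> [r _ [[r0 rq] rr]]; apply: (le_lt_trans _ (_ : (ratr r)%:E < q%:E)%E).
  by apply: ereal_inf_lbound; exists (ratr r).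
by rewrite lte_fin.
Qed.

Lemma mAk j k : measurable [set t | f (nuj j t) (tnth t k).1 (tnth t k).2].
Proof.
pose F := fun q : rat => [set t : N.-tuple T | 0 <= (ratr q : R) /\
   (nuj j t < (ratr q)%:E)%E /\ f (ratr q)%:E (tnth t k).1 (tnth t k).2].
suff -> : [set t | f (nuj j t) (tnth t k).1 (tnth t k).2] = \bigcup_q F q.
  apply: countable_bigcupT_measurable; first exact: countableP.
  move=> q; have [h|h] := pselect (0 <= (ratr q : R)).
    rewrite /F (_ : [set t | _] = [set t | (nuj j t < (ratr q)%:E)%E] `&`
       [set t | f (ratr q)%:E (tnth t k).1 (tnth t k).2]).
      by apply: measurableI; [exact: mnu_lt | exact: mfz].
    by apply/seteqP; split => t /=; [case | split].
  by rewrite /F (_ : [set t | _] = set0) //; apply/seteqP; split => t //= [].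
apply/seteqP; split => t /=.
  move=> Hf; case E : (nuj j t) Hf => [s||] Hf; last 2 first.
  - by rewrite finf in Hf.
  - by have := nuj_ge0 j t; rewrite E.
  have s0 : 0 <= s by rewrite -lee_fin -E nuj_ge0.
  have h1 := near_bool (@frc (tnth t k).1 (tnth t k).2 s s0).
  have s1 : s < s + 1 by rewrite ltrDl.
  have [q [/andP[sq _] Eq]] := near_right_rat h1 s1.
  exists q => //=; split; first by rewrite (le_trans s0) ?ltW.
  by split; [rewrite E lte_fin | rewrite Eq].
move=> [q _ [q0 [nq Hf]]].
case E : (nuj j t) nq => [s||] nq; last 2 first.
- by [].
- by have := nuj_ge0 j t; rewrite E.
have s0 : 0 <= s by rewrite -lee_fin -E nuj_ge0.
by apply: fmono Hf => //; rewrite ltW // -lte_fin.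
Qed.

Lemma mSnu j : measurable_fun setT (fun t => Sj j (nuj j t) t).
Proof.
rewrite /Sj /Fcal /fz; apply: measurable_funD.
  by apply: measurable_sum => i; apply: mind; apply: mAk.
by apply: mind; apply: mAk.
Qed.

Lemma Sj_nat j mu t : exists s : 'I_(n.+2), Sj j mu t = s%:R.
Proof.
have H : (\sum_(i < n) (f mu (tnth t (lshift m i)).1 (tnth t (lshift m i)).2 : nat)
   + f mu (tnth t (rshift n j)).1 (tnth t (rshift n j)).2 < n.+2)%N.
  rewrite ltnS -addn1 leq_add //; last by case: f.
  rewrite -[X in (_ <= X)%N]card_ord -sum1_card; apply: leq_sum => i _; by case: f.
exists (Ordinal H); rewrite /= /Sj /Fcal /fz natrD natr_sum //.
Qed.

Lemma HkE j k t : Hk j k t = \sum_(s < n.+2)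
  (fz (nuj j t) t k * ((Sj j (nuj j t) t == s%:R))%:R) * (s%:R)^-1.
Proof.
have [s Es] := Sj_nat j (nuj j t) t.
rewrite (bigD1 s) //= big1 ?addr0.
  by rewrite /Hk Es eqxx mulr1.
move=> s' ss'; rewrite Es eqr_nat.
by rewrite (_ : (s == s' :> nat) = false) ?mulr0 ?mul0r //; apply/negbTE; rewrite eq_sym.
Qed.

Lemma mHk j k : measurable_fun setT (Hk j k).
Proof.
have -> : Hk j k = fun t => \sum_(s < n.+2)
  (fz (nuj j t) t k * ((Sj j (nuj j t) t == s%:R))%:R) * (s%:R)^-1.
  by apply/funext => t; rewrite HkE.
apply: measurable_sum => s; apply: measurable_funM => //.
apply: measurable_funM; first by rewrite /fz; apply: mind; apply: mAk.
apply: mind; apply: mset; apply: measurable_fun_eqr => //; exact: mSnu.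
Qed.

Definition swp (a b k : 'I_N) : 'I_N := if k == a then b else if k == b then a else k.
Definition permt (h : 'I_N -> 'I_N) (t : N.-tuple T) : N.-tuple T :=
  [tuple tnth t (h k) | k < N].

Lemma swpK a b : involutive (swp a b).
Proof.
move=> k; rewrite /swp; case: (eqVneq k a) => [->|ka].
  by case: (eqVneq b a) => [->|ba]; rewrite ?eqxx.
case: (eqVneq k b) => [->|kb]; first by rewrite eqxx.
by rewrite (negbTE ka) (negbTE kb).
Qed.
Lemma swpL a b : swp a b a = b. Proof. by rewrite /swp eqxx. Qed.
Lemma swpR a b : b != a -> swp a b b = a. Proof. by move=> ba; rewrite /swp (negbTE ba) eqxx. Qed.
Lemma swpN a b k : k != a -> k != b -> swp a b k = k.
Proof. by move=> ka kb; rewrite /swp (negbTE ka) (negbTE kb). Qed.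

Lemma fz_permt mu h t k : fz mu (permt h t) k = fz mu t (h k).
Proof. by rewrite /fz tnth_mktuple. Qed.
Lemma gz_permt mu h t k : gz mu (permt h t) k = gz mu t (h k).
Proof. by rewrite /gz tnth_mktuple. Qed.

Section swap.
Variables (i : 'I_n) (j : 'I_m).
Local Notation sw := (swp (lshift m i) (rshift n j)).

Lemma Sj_swap mu t : Sj j mu (permt sw t) = Sj j mu t.
Proof.
have ba := rshift_neq_lshift i j.
rewrite /Sj /Fcal (bigD1 i) //= [in RHS](bigD1 i) //= !fz_permt swpL swpR //.
rewrite (eq_bigr (fun i' => fz mu t (lshift m i'))); last first.
  move=> i' ne; rewrite fz_permt swpN //; try by rewrite eq_sym rshift_neq_lshift.
by ring.
Qed.

Lemma Gj_swap mu t : Gj mu (permt sw t) j = Gj mu t j.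
Proof.
rewrite /Gj; congr (_ + _); apply: eq_bigr => i' ne; rewrite gz_permt swpN //.
  by rewrite rshift_neq_lshift.
by apply: contra ne => /eqP/(congr1 val) /= h; apply/eqP/val_inj => /=; apply/eqP; rewrite -(eqn_add2l n) h.
Qed.

Lemma nuj_swap t : nuj j (permt sw t) = nuj j t.
Proof.
have H : rj j (permt sw t) = rj j t.
  by apply/funext => r; rewrite /rj Sj_swap Gj_swap.
by rewrite /nuj H.
Qed.

Lemma Hk_swap t : Hk j (rshift n j) (permt sw t) = Hk j (lshift m i) t.
Proof. by rewrite /Hk nuj_swap fz_permt swpR ?rshift_neq_lshift // Sj_swap. Qed.
End swap.

Lemma Hk_sum j t : \sum_(i < n) Hk j (lshift m i) t + Hk j (rshift n j) t <= 1.
Proof.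
rewrite /Hk -mulr_suml -mulrDl.
have -> : \sum_(i < n) fz (nuj j t) t (lshift m i) + fz (nuj j t) t (rshift n j) =
  Sj j (nuj j t) t by [].
by case: (eqVneq (Sj j (nuj j t) t) 0) => [->|h]; rewrite ?mul0r ?ler01 ?divff.
Qed.

End core.

Section pf.
Context {R : realType} d1 d2 (T1 : measurableType d1) (T2 : measurableType d2)
  (mu : {measure set T1 -> \bar R}) (phi : T1 -> T2).
Definition pf of measurable_fun [set: T1] phi := pushforward mu phi.
Context (mphi : measurable_fun [set: T1] phi).
Let pf0 : pf mphi set0 = 0%E.
Proof. by rewrite /pf /pushforward preimage_set0 measure0. Qed.
Let pf_ge0 A : (0 <= pf mphi A)%E.
Proof. exact: measure_ge0. Qed.
Let pf_sa : semi_sigma_additive (pf mphi).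
Proof.
move=> F mF tF mUF; rewrite /pf /pushforward preimage_bigcup.
apply: measure_semi_sigma_additive.
- by move=> n; rewrite -[X in measurable X]setTI; exact: mphi.
- apply/trivIsetP => /= i j _ _ ij; rewrite -preimage_setI.
  by move/trivIsetP : tF => /(_ _ _ _ _ ij) ->//; rewrite preimage_set0.
- by rewrite -preimage_bigcup -[X in measurable X]setTI; exact: mphi.
Qed.
HB.instance Definition _ := isMeasure.Build _ _ _ (pf mphi) pf0 pf_ge0 pf_sa.
End pf.

Section tuples.
Context {d : measure_display} {T : measurableType d} (N : nat).

Definition cyl (B : 'I_N -> set T) := [set t : N.-tuple T | forall k, B k (tnth t k)].

Lemma cyl_measurable B : (forall k, measurable (B k)) -> measurable (cyl B).
Proof.
move=> mB.
have E : forall s : seq 'I_N, \big[setI/setT]_(k <- s) ((fun t : N.-tuple T => tnth t k) @^-1` B k) =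
    [set t | forall k, k \in s -> B k (tnth t k)].
  elim => [|a s IH]; first by rewrite big_nil; apply/seteqP; split => t //=.
  rewrite big_cons IH; apply/seteqP; split => t /=.
    by move=> [Ba H] k; rewrite in_cons => /predU1P[->//|]; exact: H.
  by move=> H; split => [|k ks]; apply: H; rewrite in_cons ?eqxx ?ks ?orbT.
have -> : cyl B = \big[setI/setT]_(k <- index_enum 'I_N) ((fun t : N.-tuple T => tnth t k) @^-1` B k).
  by rewrite E; apply/seteqP; split => t /= H k; [move=> _; apply: H | apply: H; rewrite mem_index_enum].
apply: (big_ind (fun U => measurable U)) => //; first exact: measurableI.
move=> k _; rewrite -[X in measurable X]setTI; exact: (measurable_tnth k).
Qed.

Definition cylG := [set A | exists B : 'I_N -> set T,
  (forall k, measurable (B k)) /\ A = cyl B].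

Lemma tuple_measurableE : (@measurable _ (N.-tuple T)) = <<s cylG >>.
Proof.
apply/seteqP; split; last first.
  apply: smallest_sub; first exact: sigma_algebra_measurable.
  by move=> _ [B [mB ->]]; exact: cyl_measurable.
apply: smallest_sub; first exact: smallest_sigma_algebra.
apply: (big_ind (fun U => U `<=` <<s cylG >>)) => //.
  by move=> U V HU HV A [/HU|/HV].
move=> i _ _ [A mA <-]; apply: sub_sigma_algebra.
exists (fun k => if k == i then A else setT); split.
  by move=> k; case: ifP.
apply/seteqP; split => t /=.
  by move=> [_ HA] k; case: ifP => // /eqP ->.
by move=> H; split => //; have := H i; rewrite eqxx.
Qed.

End tuples.

Section prob.
Context {R : realType} {dX dY d : measure_display}
  {X : measurableType dX} {Y : measurableType dY} {Omega : measurableType d}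
  (P : probability Omega R) (n m : nat) (Z : nat -> Omega -> X * Y)
  (mZ : forall i, (i < n + m)%N -> measurable_fun setT (Z i))
  (indep : mutually_independent P (n + m) Z)
  (ident : identically_distributed P (n + m) Z).
Local Notation N := (n + m)%N.
Local Notation T := (X * Y)%type.

Definition V (w : Omega) : N.-tuple T := [tuple Z k w | k < N].

Lemma mV : measurable_fun setT V.
Proof.
apply/measurable_fun_tnthP => k.
rewrite (_ : _ \o _ = Z k); first exact: mZ.
by apply/funext => w; rewrite /= tnth_mktuple.
Qed.

Lemma mpermt (h : 'I_N -> 'I_N) : measurable_fun setT (@permt _ _ X Y n m h).
Proof.
apply/measurable_fun_tnthP => k.
rewrite (_ : _ \o _ = fun t : N.-tuple T => tnth t (h k)); first exact: measurable_tnth.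
by apply/funext => t; rewrite /= tnth_mktuple.
Qed.

Lemma cyl_prob (B : 'I_N -> set T) : (forall k, measurable (B k)) ->
  P (V @^-1` cyl B) = \big[*%E/1%E]_(k < N) P (Z k @^-1` B k).
Proof.
move=> mB.
pose B' := fun i : nat => if (insub i : option 'I_N) is Some k then B k else setT.
have mB' : forall i, measurable (B' i) by move=> i; rewrite /B'; case: insub.
have E1 : V @^-1` cyl B = \bigcap_(i in [set i | (i < N)%N]) (Z i @^-1` B' i).
  apply/seteqP; split => w /=.
    move=> H i iN; rewrite /B' insubT /=; have := H (Ordinal iN).
    by rewrite tnth_mktuple.
  by move=> H k; have := H k (ltn_ord k); rewrite /B' valK tnth_mktuple.
rewrite E1 (indep mB'); apply: eq_bigr => k _; by rewrite /B' valK.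
Qed.

Lemma law_perm (h : 'I_N -> 'I_N) (hK : involutive h) A : measurable A ->
  P (V @^-1` (permt h @^-1` A)) = P (V @^-1` A).
Proof.
move=> mA.
have mVh : measurable_fun setT (permt h \o V) := measurableT_comp (mpermt h) mV.
have setIG : setI_closed (@cylG _ T N).
  move=> _ _ [B [mB ->]] [C [mC ->]]; exists (fun k => B k `&` C k); split.
    by move=> k; apply: measurableI.
  by apply/seteqP; split => t /=; [move=> [H1 H2] k; split | move=> H; split => k; case: (H k)].
have Gg : forall i : nat, @cylG _ T N ((fun=> setT) i : set (N.-tuple T)).
  by move=> _; exists (fun=> setT); split => //; apply/seteqP; split.
have gc : \bigcup_(k : nat) ((fun=> setT) k : set (N.-tuple T)) = setT.
  by apply/seteqP; split => // t _; exists 0%N.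
have m1m2 : forall B, @cylG _ T N B -> pf P mVh B = pf P mV B.
  move=> _ [B [mB ->]]; rewrite /pf /pushforward.
  have -> : (permt h \o V) @^-1` cyl B = V @^-1` cyl (fun k => B (h k)).
    apply/seteqP; split => w /= H k.
      by have := H (h k); rewrite /= tnth_mktuple hK.
    by rewrite /= tnth_mktuple; have := H (h k); rewrite hK.
  transitivity (\big[*%E/1%E]_(k < N) P (Z k @^-1` B (h k))).
    by apply: cyl_prob => k; apply: mB.
  transitivity (\big[*%E/1%E]_(k < N) P (Z k @^-1` B k)); last by symmetry; apply: cyl_prob.
  rewrite [RHS](reindex_inj (can_inj hK)) /=; apply: eq_bigr => k _.
  by apply: ident; [exact: ltn_ord | exact: ltn_ord | exact: mB].
have fin : forall k : nat, (pf P mVh ((fun=> setT) k) < +oo)%E.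
  by move=> _; rewrite /pf /pushforward /= preimage_setT probability_setT ltry.
have := @measure_unique _ R _ (@cylG _ T N) (fun=> setT) (@tuple_measurableE _ T N) setIG Gg gc
  (pf P mVh) (pf P mV) m1m2 fin A mA.
by rewrite /pf /pushforward.
Qed.

Lemma integral_perm (h : 'I_N -> 'I_N) (hK : involutive h)
  (phi : N.-tuple T -> \bar R) : measurable_fun setT phi -> (forall t, (0 <= phi t)%E) ->
  (\int[P]_w phi (permt h (V w)) = \int[P]_w phi (V w))%E.
Proof.
move=> mphi phi0.
have mVh : measurable_fun setT (permt h \o V) := measurableT_comp (mpermt h) mV.
have E1 : (\int[P]_w phi (permt h (V w)) = \int[pf P mVh]_y phi y)%E.
  by rewrite /pf ge0_integral_pushforward // preimage_setT.
have E2 : (\int[P]_w phi (V w) = \int[pf P mV]_y phi y)%E.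
  by have mV0 := mV; rewrite /pf ge0_integral_pushforward // preimage_setT.
rewrite E1 E2; apply: eq_measure_integral => A mA _.
by rewrite /pf /pushforward; exact: law_perm.
Qed.

End prob.

Unset Implicit Arguments.

Theorem lemma3 (R : realType) (dX dY d : measure_display)
  (X : measurableType dX) (Y : measurableType dY) (Omega : measurableType d)
  (P : probability Omega R) (alpha : R) (n m : nat)
  (f : \bar R -> X -> Y -> bool) (g : \bar R -> X -> bool)
  (Z : nat -> Omega -> X * Y) :
  0 < alpha < 1 ->
  (0 < m)%N ->
  (* measurability of the indicator functions *)
  (forall mu : R, 0 <= mu -> measurable [set p : X * Y | f mu%:E p.1 p.2]) ->
  (forall mu : R, 0 <= mu -> measurable [set x : X | g mu%:E x]) ->
  (* (1) monotonicity and domination *)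
  (forall x y (mu mu' : R), 0 <= mu -> mu <= mu' -> f mu'%:E x y -> f mu%:E x y) ->
  (forall x y (mu : R), 0 <= mu -> f mu%:E x y -> g mu%:E x) ->
  (* (2) right-continuity on [0, oo) *)
  (forall x y (mu : R), 0 <= mu ->
     (fun t : R => (f t%:E x y)%:R : R) @ mu^'+ --> ((f mu%:E x y)%:R : R)) ->
  (forall x (mu : R), 0 <= mu ->
     (fun t : R => (g t%:E x)%:R : R) @ mu^'+ --> ((g mu%:E x)%:R : R)) ->
  (* (3) values at infinity *)
  (forall x y, f +oo%E x y = false) ->
  (forall x, g +oo%E x = false) ->
  (* (X_i, Y_i), i = 1..n+m, i.i.d. *)
  (forall i, (i < n + m)%N -> measurable_fun setT (Z i)) ->
  mutually_independent P (n + m) Z ->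
  identically_distributed P (n + m) Z ->
  (\int[P]_w (fdp_at f g n m Z (mu_alpha f g n m Z alpha w) w)%:E <= alpha%:E)%E.
Proof.
move=> /andP[a0 _] m0 mf mg fmono fg frc grc finf _ mZ indep ident.
have alpha0 : 0 <= alpha := ltW a0.
pose Vw := V n m Z.
have mVw : measurable_fun setT Vw := mV mZ.
have Ert : forall w, rt f g (Vw w) = ratio_hat f g n m Z w.
  move=> w; apply/funext => mu; rewrite /rt /ratio_hat /Fcal /Gt /fz /gz.
  congr (_ * (_ + _) / (_ * Num.max _ _)); apply: eq_bigr => i _; by rewrite tnth_mktuple.
have Emu : forall w, muT f g alpha (Vw w) = mu_alpha f g n m Z alpha w.
  by move=> w; rewrite /muT /mu_alpha Ert.
have Efdp : forall w, fdp_at f g n m Z (mu_alpha f g n m Z alpha w) w =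
    fdpT f g (muT f g alpha (Vw w)) (Vw w).
  move=> w; rewrite Emu /fdp_at /fdpT /Gt /fz /gz.
  by congr (_ / Num.max _ _); apply: eq_bigr => i _; rewrite tnth_mktuple.
set c := alpha * n.+1%:R / m%:R.
have c0 : 0 <= c by rewrite /c divr_ge0 ?mulr_ge0.
pose H (j : 'I_m) (t : (n + m).-tuple (X * Y)) := Hk f g alpha j (rshift n j) t.
have mHk' : forall j k, measurable_fun setT (fun w => (Hk f g alpha j k (Vw w))%:E).
  move=> j k; apply/measurable_EFinP; apply: measurableT_comp mVw.
  exact: mHk.
have step2 : (\int[P]_w (fdp_at f g n m Z (mu_alpha f g n m Z alpha w) w)%:E <=
    \int[P]_w (\sum_(j < m) (c * H j (Vw w))%:E))%E.
  apply: le_integral_nm => w.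
    rewrite lee_fin Efdp /fdpT divr_ge0 //.
      by apply: sumr_ge0 => i _; exact: fz_ge0.
    by rewrite (le_trans ler01) // le_max lexx.
  by rewrite sumEFin lee_fin Efdp; exact: fdp_bound.
apply: (le_trans step2).
rewrite ge0_integral_sum //; first last.
- by move=> j w _; rewrite lee_fin mulr_ge0 // Hk_ge0.
- by move=> j; apply/measurable_EFinP; apply: measurable_funM => //; apply/measurable_EFinP; exact: mHk'.
have key : forall j : 'I_m, exists I : R,
    (\int[P]_w (H j (Vw w))%:E = I%:E)%E /\ n.+1%:R * I <= 1.
  move=> j.
  have Esw : forall i : 'I_n, (\int[P]_w (Hk f g alpha j (lshift m i) (Vw w))%:E =
      \int[P]_w (H j (Vw w))%:E)%E.
    move=> i; rewrite -(integral_perm mZ indep ident (swpK (lshift m i) (rshift n j))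
       (phi := fun t => (H j t)%:E)).
    - by apply: eq_integral => w _; rewrite /H Hk_swap.
    - by apply/measurable_EFinP; exact: mHk.
    - by move=> t; rewrite lee_fin; exact: Hk_ge0.
  have E3 : (\int[P]_w ((\sum_(i < n) Hk f g alpha j (lshift m i) (Vw w) + H j (Vw w))%:E) =
      \sum_(i < n) \int[P]_w (Hk f g alpha j (lshift m i) (Vw w))%:E +
      \int[P]_w (H j (Vw w))%:E)%E.
    have mHl : forall i : 'I_n, measurable_fun setT
        (fun w => (Hk f g alpha j (lshift m i) (Vw w))%:E) := fun i => mHk' j _.
    have mHj : measurable_fun setT (fun w => (H j (Vw w))%:E) := mHk' j _.
    have pHl : forall (i : 'I_n) w, setT w ->
        (0 <= (Hk f g alpha j (lshift m i) (Vw w))%:E)%E.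
      by move=> i w _; rewrite lee_fin Hk_ge0.
    have pHj : forall w, setT w -> (0 <= (H j (Vw w))%:E)%E.
      by move=> w _; rewrite lee_fin Hk_ge0.
    rewrite -(@ge0_integral_sum _ _ _ P setT measurableT _ _ mHl pHl).
    rewrite -ge0_integralD //.
    - by apply: eq_integral => w _; rewrite sumEFin EFinD.
    - by move=> w _; apply: sume_ge0 => i _; exact: pHl.
    - by apply: emeasurable_sum => i; exact: mHl.
  have Hsum : (\int[P]_w ((\sum_(i < n) Hk f g alpha j (lshift m i) (Vw w) +
      H j (Vw w))%:E) <= 1)%E.
    apply: le_trans.
      apply: (@le_integral_nm _ _ _ P _ (cst 1%E)) => w.
        by rewrite lee_fin addr_ge0 ?Hk_ge0 // sumr_ge0 // => i _; exact: Hk_ge0.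
      by rewrite lee_fin; exact: Hk_sum.
    by rewrite integral_cst // mul1e; apply: probability_le1.
  rewrite E3 (eq_bigr (fun=> (\int[P]_w (H j (Vw w))%:E)%E)) in Hsum; last first.
    by move=> i _; exact: Esw.
  set I := (\int[P]_w (H j (Vw w))%:E)%E in Hsum *.
  have I0 : (0 <= I)%E by apply: integral_ge0 => w _; rewrite lee_fin Hk_ge0.
  have Ifin : I \is a fin_num.
    rewrite ge0_fin_numE // (le_lt_trans _ (ltry 1)) //.
    apply: le_trans Hsum; rewrite leeDr //.
    by apply: sume_ge0 => i _.
  exists (fine I); split; first by rewrite fineK.
  move: Hsum; rewrite -(fineK Ifin) sumEFin -EFinD lee_fin sumr_const card_ord.
  by rewrite mulr_natl mulrSr.
rewrite (eq_bigr (fun j => (c%:E * \int[P]_w (H j (Vw w))%:E)%E)); last first.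
  move=> j _; rewrite -ge0_integralZl_EFin //.
  - by move=> w _; rewrite lee_fin Hk_ge0.
  - exact: mHk'.
have [Ij HIj] : exists Ij : 'I_m -> R, forall j,
    (\int[P]_w (H j (Vw w))%:E = (Ij j)%:E)%E /\ n.+1%:R * Ij j <= 1.
  exists (fun j => fine (\int[P]_w (H j (Vw w))%:E)) => j.
  have [I [-> HI]] := key j; by split.
rewrite (eq_bigr (fun j => (c * Ij j)%:E)); last by move=> j _; rewrite (HIj j).1.
rewrite sumEFin lee_fin.
have n1 : 0 < n.+1%:R :> R by rewrite ltr0n.
apply: (@le_trans _ _ (\sum_(j < m) c * (n.+1%:R)^-1)).
  apply: ler_sum => j _; apply: ler_wpM2l => //.
  by rewrite -[X in _ <= X]mulr1 ler_pdivlMl // (HIj j).2.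
rewrite sumr_const card_ord /c -mulr_natl.
have mR : m%:R != 0 :> R by rewrite pnatr_eq0 -lt0n.
by rewrite le_eqVlt; apply/orP; left; apply/eqP; field; rewrite mR gt_eqF.
Qed.
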